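(* Let $\mathbf{S}\in\mathbb{R}^{d_v\times d_k}$ be a nonzero matrix with singular value decomposition $\mathbf{S}=\sum_{i=1}^{d}\sigma_i\mathbf{u}_i\mathbf{w}_i^\top$, $d=\min(d_k,d_v)$, $\sigma_1\ge\cdots\ge\sigma_d\ge0$ (so $\mathbf{w}_1\in\mathbb{R}^{d_k}$ is a unit right singular vector for the largest singular value $\sigma_1$). Let $\mathbf{q}^*\in\mathbb{R}^{d_k}$ (the pure query) and $\mathbf{n}\in\mathbb{R}^{d_k}$ (noise) be nonzero, let $\tilde{\mathbf{q}}=\mathbf{q}^*+\mathbf{n}$, $\mathbf{o}=\mathbf{S}\tilde{\mathbf{q}}$, $\mathbf{o}^*=\mathbf{S}\mathbf{q}^*$, and assume $\mathbf{o}^*\neq\mathbf{0}$. Define $\delta=|\mathbf{n}^\top\mathbf{w}_1|/\|\mathbf{n}\|_2$ and $\gamma=|\mathbf{q}^{*\top}\mathbf{w}_1|/\|\mathbf{q}^*\|_2$. Then $$\frac{\delta}{\sqrt{\operatorname{er}(\mathbf{S})}}\le\frac{\|\mathbf{o}-\mathbf{o}^*\|_2/\|\mathbf{o}^*\|_2}{\|\mathbf{n}\|_2/\|\mathbf{q}^*\|_2},$$ and, if $\gamma>0$, $$\frac{\|\mathbf{o}-\mathbf{o}^*\|_2/\|\mathbf{o}^*\|_2}{\|\mathbf{n}\|_2/\|\mathbf{q}^*\|_2}\le\frac{\sqrt{\operatorname{er}(\mathbf{S})}}{\gamma}.$$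
   Context: For a nonzero matrix $\mathbf{S}$ with singular values $\sigma_1\ge\sigma_2\ge\cdots\ge0$, the effective rank is $\operatorname{er}(\mathbf{S})=\|\mathbf{S}\|_F^2/\|\mathbf{S}\|_2^2=\sum_i\sigma_i^2/\sigma_1^2$. *)

(* Defs.v *)
From HB Require Import structures.
From mathcomp Require Import all_boot all_order all_algebra.
From mathcomp Require Import all_classical all_reals.
Set Implicit Arguments. Unset Strict Implicit. Unset Printing Implicit Defensive.
Import Order.TTheory GRing.Theory Num.Theory.
Local Open Scope ring_scope.
Local Open Scope classical_set_scope.

Definition vnorm (R : realType) (n : nat) (v : 'cV[R]_n) : R :=
  Num.sqrt (\sum_(i < n) v i 0 ^+ 2).

Definition vdot (R : realType) (n : nat) (v w : 'cV[R]_n) : R :=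
  \sum_(i < n) v i 0 * w i 0.

Definition frobnorm (R : realType) (m n : nat) (S : 'M[R]_(m, n)) : R :=
  Num.sqrt (\sum_(i < m) \sum_(j < n) S i j ^+ 2).

Definition specnorm (R : realType) (m n : nat) (S : 'M[R]_(m, n)) : R :=
  sup [set vnorm (S *m x) | x in [set x : 'cV[R]_n | vnorm x = 1]].

Definition effrank (R : realType) (m n : nat) (S : 'M[R]_(m, n)) : R :=
  frobnorm S ^+ 2 / specnorm S ^+ 2.

(* Main.v *)
Require Import Defs.
From HB Require Import structures.
From mathcomp Require Import all_boot all_order all_algebra.
From mathcomp Require Import all_classical all_reals.
Set Implicit Arguments. Unset Strict Implicit.
Import Order.TTheory GRing.Theory Num.Theory.
From mathcomp Require Import ring lra.
Local Open Scope ring_scope.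
Local Open Scope classical_set_scope.

Definition sq (R : realType) (k : nat) (x : 'cV[R]_k) : R := \sum_(i < k) x i 0 ^+ 2.

Lemma sqE (R : realType) k (x : 'cV[R]_k) : sq x = (x^T *m x) 0 0.
Proof. rewrite /sq !mxE; apply: eq_bigr => i _; by rewrite !mxE expr2. Qed.

Lemma sq_ge0 (R : realType) k (x : 'cV[R]_k) : 0 <= sq x.
Proof. by apply: sumr_ge0 => i _; rewrite sqr_ge0. Qed.

Lemma vnormE (R : realType) k (x : 'cV[R]_k) : vnorm x = Num.sqrt (sq x).
Proof. by []. Qed.

Lemma sq_orth (R : realType) m k (U : 'M[R]_(m, k)) (hU : U^T *m U = 1%:M) z :
  sq (U *m z) = sq z.
Proof. by rewrite !sqE trmx_mul -mulmxA (mulmxA U^T) hU mul1mx. Qed.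

Lemma sq_diag (R : realType) k (s : 'rV[R]_k) (y : 'cV[R]_k) :
  sq (diag_mx s *m y) = \sum_(i < k) s 0 i ^+ 2 * y i 0 ^+ 2.
Proof. rewrite /sq mul_diag_mx; apply: eq_bigr => i _; by rewrite mxE exprMn. Qed.

Lemma bessel (R : realType) m k (W : 'M[R]_(m, k)) (hW : W^T *m W = 1%:M) x :
  sq (W^T *m x) <= sq x.
Proof.
have := sq_ge0 (x - W *m (W^T *m x)).
set y := W^T *m x.
have -> : sq (x - W *m y) = sq x - sq y.
  rewrite !sqE (raddfB (@trmx R _ _)) !mulmxBl !mulmxBr.
  have e1 : x^T *m (W *m y) = y^T *m y by rewrite mulmxA /y trmx_mul trmxK.
  have e2 : (W *m y)^T *m x = y^T *m y by rewrite trmx_mul -mulmxA.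
  have e3 : (W *m y)^T *m (W *m y) = y^T *m y by rewrite trmx_mul -mulmxA (mulmxA W^T) hW mul1mx.
  rewrite e1 e2 e3 !mxE; ring.
by rewrite subr_ge0.
Qed.

Lemma sqrt_le_of (R : realType) (u v : R) : 0 <= v -> u <= v ^+ 2 -> Num.sqrt u <= v.
Proof.
move=> hv huv; have := sqrtr_ge0 u; case: (lerP 0 u) => hu _.
  by rewrite -(ger0_norm hv) -sqrtr_sqr ler_sqrt // exprn_ge0.
by rewrite ltr0_sqrtr.
Qed.

Lemma sqrt_ge_of (R : realType) (u v : R) : 0 <= v -> v ^+ 2 <= u -> v <= Num.sqrt u.
Proof.
move=> hv huv; rewrite -(ger0_norm hv) -sqrtr_sqr ler_sqrt //.
exact: le_trans (exprn_ge0 2 hv) huv.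
Qed.

Section Main.
Variables (R : realType) (dk dv d : nat) (S : 'M[R]_(dv, dk))
  (sigma : 'rV[R]_d.+1) (U : 'M[R]_(dv, d.+1)) (W : 'M[R]_(dk, d.+1))
  (hU : U^T *m U = 1%:M) (hW : W^T *m W = 1%:M)
  (hsig0 : forall i : 'I_d.+1, 0 <= sigma 0 i)
  (hsig_sorted : forall i j : 'I_d.+1, (i <= j)%N -> sigma 0 j <= sigma 0 i)
  (hsvd : S = U *m diag_mx sigma *m W^T).

Lemma sqS x : sq (S *m x) = \sum_(i < d.+1) sigma 0 i ^+ 2 * (W^T *m x) i 0 ^+ 2.
Proof. by rewrite hsvd -!mulmxA sq_orth // sq_diag. Qed.

Lemma sqS_le x : sq (S *m x) <= sigma 0 ord0 ^+ 2 * sq x.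
Proof.
rewrite sqS; apply: (le_trans _ (ler_wpM2l (exprn_ge0 2 (hsig0 ord0)) (bessel hW x))).
rewrite /sq mulr_sumr; apply: ler_sum => i _; apply: ler_wpM2r; first exact: sqr_ge0.
have h := @hsig_sorted ord0 i (leq0n _); have h0 := hsig0 i.
by rewrite ler_pXn2r // ?nnegrE // (le_trans h0 h).
Qed.

Lemma sqS_ge x : sigma 0 ord0 ^+ 2 * (W^T *m x) ord0 0 ^+ 2 <= sq (S *m x).
Proof.
rewrite sqS (bigD1 ord0) //= lerDl; apply: sumr_ge0 => i _.
by rewrite mulr_ge0 // sqr_ge0.
Qed.

Lemma vdotE x : vdot x (col ord0 W) = (W^T *m x) ord0 0.
Proof. rewrite /vdot mxE; apply: eq_bigr => i _; by rewrite !mxE mulrC. Qed.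

Lemma w1_unit : sq (col ord0 W) = 1.
Proof.
rewrite colE sq_orth // /sq (bigD1 ord0) //= big1 ?addr0; first by rewrite mxE !eqxx expr1n.
by move=> i /negPf hi; rewrite mxE hi /= expr0n.
Qed.

Lemma Sw1 : sq (S *m col ord0 W) = sigma 0 ord0 ^+ 2.
Proof.
rewrite sqS colE mulmxA hW mul1mx (bigD1 ord0) //= big1 ?addr0.
  by rewrite mxE !eqxx expr1n mulr1.
by move=> i /negPf hi; rewrite mxE hi /= expr0n mulr0.
Qed.

Lemma frob2 : frobnorm S ^+ 2 = \sum_(i < d.+1) sigma 0 i ^+ 2.
Proof.
rewrite /frobnorm sqr_sqrtr; last by apply: sumr_ge0 => i _; apply: sumr_ge0 => j _; exact: sqr_ge0.
have -> : \sum_(i < dv) \sum_(j < dk) S i j ^+ 2 = \tr (S *m S^T).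
  rewrite /mxtrace; apply: eq_bigr => i _; rewrite mxE; apply: eq_bigr => j _.
  by rewrite mxE expr2.
rewrite hsvd !trmx_mul trmxK tr_diag_mx.
rewrite -!mulmxA mxtrace_mulC (mulmxA W^T W) hW mul1mx.
rewrite -!mulmxA hU mulmx1 mul_diag_mx /mxtrace.
by apply: eq_bigr => i _; rewrite !mxE eqxx mulr1n expr2.
Qed.

Lemma frob_ge : sigma 0 ord0 ^+ 2 <= frobnorm S ^+ 2.
Proof.
rewrite frob2 (bigD1 ord0) //= lerDl; apply: sumr_ge0 => i _; exact: sqr_ge0.
Qed.

Lemma spec_eq : specnorm S = sigma 0 ord0.
Proof.
have s0 := hsig0 ord0.
have ne : [set vnorm (S *m x) | x in [set x : 'cV[R]_dk | vnorm x = 1]] !=set0.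
  exists (vnorm (S *m col ord0 W)); exists (col ord0 W) => //.
  by rewrite /= vnormE w1_unit sqrtr1.
have ub : ubound [set vnorm (S *m x) | x in [set x : 'cV[R]_dk | vnorm x = 1]] (sigma 0 ord0).
  move=> _ [x /= hx <-]; rewrite vnormE; apply: sqrt_le_of => //.
  have : sq x = 1 by rewrite -(sqr_sqrtr (sq_ge0 x)) -vnormE hx expr1n.
  by move=> h1; have := sqS_le x; rewrite h1 mulr1.
apply/eqP; rewrite eq_le; apply/andP; split; first exact: ge_sup.
apply: (sup_upper_bound (conj ne (ex_intro _ _ ub))).
exists (col ord0 W); first by rewrite /= vnormE w1_unit sqrtr1.
by rewrite vnormE Sw1 sqrtr_sqr ger0_norm.
Qed.
End Main.

Unset Implicit Arguments.
Local Close Scope classical_set_scope.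

Theorem theorem2p4 (R : realType) (dk dv d : nat)
  (hd : d.+1 = minn dk dv)
  (S : 'M[R]_(dv, dk)) (hS : S != 0)
  (sigma : 'rV[R]_d.+1) (U : 'M[R]_(dv, d.+1)) (W : 'M[R]_(dk, d.+1))
  (hU : U^T *m U = 1%:M) (hW : W^T *m W = 1%:M)
  (hsig0 : forall i : 'I_d.+1, 0 <= sigma 0 i)
  (hsig_sorted : forall i j : 'I_d.+1, (i <= j)%N -> sigma 0 j <= sigma 0 i)
  (hsvd : S = U *m diag_mx sigma *m W^T)
  (qstar n : 'cV[R]_dk) (hq : qstar != 0) (hn : n != 0)
  (ho : S *m qstar != 0) :
  let w1 := col ord0 W in
  let qt := qstar + n in
  let o := S *m qt in
  let ostar := S *m qstar in
  let delta := `|vdot n w1| / vnorm n in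
  let gamma := `|vdot qstar w1| / vnorm qstar in
  let ratio := (vnorm (o - ostar) / vnorm ostar) / (vnorm n / vnorm qstar) in
  delta / Num.sqrt (effrank S) <= ratio /\
  (0 < gamma -> ratio <= Num.sqrt (effrank S) / gamma).
Proof.
move=> w1 qt o ostar delta gamma ratio.
have eon : o - ostar = S *m n by rewrite /o /ostar /qt mulmxDr addrAC subrr add0r.
have vpos : forall k (x : 'cV[R]_k), x != 0 -> 0 < vnorm x.
  move=> k x hx; rewrite vnormE sqrtr_gt0 lt_def sq_ge0 andbT.
  apply/negP => /eqP h0; move/eqP: hx; apply; apply/matrixP => i j.
  rewrite !ord1 mxE; apply/eqP; rewrite -sqrf_eq0; apply/eqP.
  apply/eqP; rewrite eq_le sqr_ge0 andbT -h0 /sq (bigD1 i) //= lerDl.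
  by apply: sumr_ge0 => i' _; exact: sqr_ge0.
have sq2 : forall k (x : 'cV[R]_k), vnorm x ^+ 2 = sq x.
  by move=> k x; rewrite vnormE sqr_sqrtr // sq_ge0.
set s := sigma 0 ord0.
have s0 : 0 <= s := hsig0 ord0.
set a := vnorm n. set b := vnorm qstar. set c := vnorm (S *m n). set e := vnorm ostar.
set F := frobnorm S.
have a0 : 0 < a by exact: vpos.
have b0 : 0 < b by exact: vpos.
have e0 : 0 < e by exact: vpos.
have c0 : 0 <= c by exact: sqrtr_ge0.
have F0 : 0 <= F by exact: sqrtr_ge0.
have ale : forall x : 'cV[R]_dk, vnorm (S *m x) <= s * vnorm x.
  move=> x; rewrite vnormE; apply: sqrt_le_of; first by rewrite mulr_ge0 // sqrtr_ge0.
  by rewrite exprMn sq2; exact: (sqS_le hU hW hsig0 hsig_sorted hsvd).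
have age : forall x : 'cV[R]_dk, s * `|vdot x w1| <= vnorm (S *m x).
  move=> x; rewrite vnormE; apply: sqrt_ge_of; first by rewrite mulr_ge0.
  rewrite exprMn real_normK ?num_real // /w1 vdotE; exact: (sqS_ge hU hsvd).
have esb : e <= s * b := ale qstar.
have s0' : 0 < s.
  rewrite lt_def s0 andbT; apply/eqP => hs; move: esb; rewrite hs mul0r.
  by rewrite leNgt e0.
have Fs : s <= F.
  rewrite -(ler_pXn2r (n:=2)) // ?nnegrE //; exact: (frob_ge hU hW hsvd).
have er : Num.sqrt (effrank S) = F / s.
  rewrite /effrank (spec_eq hU hW hsig0 hsig_sorted hsvd) -/s -/F -expr_div_n sqrtr_sqr.
  by rewrite ger0_norm // divr_ge0.
have cn := age n. have cup := ale n.
have eq := age qstar.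
rewrite -/a -/c in cn cup. rewrite -/b -/e in eq.
rewrite /ratio eon -/c -/e -/a -/b er /delta /gamma -/a -/b.
set tn := `|vdot n w1|. set tq := `|vdot qstar w1|.
have tn0 : 0 <= tn := normr_ge0 _. have tq0 : 0 <= tq := normr_ge0 _.
have Fpos : 0 < F by exact: lt_le_trans s0' Fs.
split.
  rewrite -subr_ge0.
  have -> : c / e / (a / b) - tn / a / (F / s) = (c * b * F - tn * s * e) / (e * a * F).
    field; rewrite ?gt_eqF //; apply/and3P; split; rewrite gt_eqF //.
  apply: divr_ge0; last by rewrite !mulr_ge0 // ltW.
  rewrite subr_ge0.
  have h1 : tn * s * e <= c * e by apply: ler_wpM2r; [exact: ltW | rewrite mulrC].
  have h2 : c * e <= c * b * F.
    rewrite -mulrA ler_wpM2l //; apply: (le_trans esb).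
    by rewrite mulrC ler_wpM2l // ltW.
  exact: le_trans h1 h2.
move=> g0.
have tqp : 0 < tq by move: g0; rewrite pmulr_lgt0 // invr_gt0.
rewrite -subr_ge0.
have -> : F / s / (tq / b) - c / e / (a / b) = b * (F * e * a - c * s * tq) / (s * tq * e * a).
  field; rewrite ?gt_eqF //; apply/and4P; split; rewrite gt_eqF //.
apply: divr_ge0; last by rewrite !mulr_ge0 // ltW.
apply: mulr_ge0; first exact: ltW.
rewrite subr_ge0.
have h1 : c * s * tq <= s * a * e.
  rewrite -mulrA (mulrC s) ler_pM // ?mulr_ge0 //.
  by rewrite mulrC.
have h2 : s * a * e <= F * e * a.
  rewrite mulrAC; apply: ler_wpM2r; first exact: ltW.
  by apply: ler_wpM2r => //; exact: ltW.
exact: le_trans h1 h2.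
Qed.
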